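(* Let $\bar B\subset\Sigma_2$ be a proper real trigonal curve. Then the set of non-separating real proper sections (with respect to $\bar B$), regarded as a subset of the affine space $\{(a,b,c)\in\mathbb R^3\}$ of real proper sections $y=ax^2+bx+c$, has exactly two connected components $\mathcal S_+$ and $\mathcal S_-$, each of which is nonempty, open and convex.
   Context: $\Sigma_2$ is the Hirzebruch surface of degree $2$ with exceptional section $E$ ($E^2=-2$), with its standard real structure. Use real affine coordinates $(x,y)$ in which $E$ is $\{y=\infty\}$; near the fiber $x=\infty$ use $u=1/x$, $v=y/x^2$. A proper section is a section disjoint from $E$; a real proper section has the form $y=ax^2+bx+c$ with $a,b,c\in\mathbb R$ (near $x=\infty$: $v=a+bu+cu^2$). A proper trigonal curve is a curve $\bar B\subset\Sigma_2$ disjoint from $E$ given by $y^3+y^2p_2(x)+yp_4(x)+p_6(x)=0$ with $\deg p_d\le d$; it is real if the $p_d$ have real coefficients. For a real proper section $L$, the complement $(\Sigma_2)_{\mathbb R}\setminus(L_{\mathbb R}\cup E_{\mathbb R})$ has two regions (chessboard coloring); $L$ is non-separating with respect to $\bar B$ if $\bar B_{\mathbb R}$ lies entirely in one of these two regions. *)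

(* Defs.v *)
From HB Require Import structures.
From mathcomp Require Import all_boot all_order all_algebra.
From mathcomp Require Import all_classical all_reals all_analysis.
Set Implicit Arguments. Unset Strict Implicit. Unset Printing Implicit Defensive.
Import Order.TTheory GRing.Theory Num.Theory.
Import numFieldNormedType.Exports.
Local Open Scope classical_set_scope.
Local Open Scope ring_scope.

(* A real proper trigonal curve in Sigma_2:
     y^3 + y^2 p2(x) + y p4(x) + p6(x) = 0,  deg p_d <= d, real coefficients. *)
Record trigonal (R : realType) := Trigonal {
  tp2 : {poly R}; tp4 : {poly R}; tp6 : {poly R};
  tp2_deg : (size tp2 <= 3)%N;
  tp4_deg : (size tp4 <= 5)%N;
  tp6_deg : (size tp6 <= 7)%N }.

Definition trig_eq (R : realType) (B : trigonal R) (x y : R) : R :=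
  y ^+ 3 + y ^+ 2 * (tp2 B).[x] + y * (tp4 B).[x] + (tp6 B).[x].

(* Equation of B in the chart (u,v) = (1/x, y/x^2), restricted to the fiber
   u = 0 (the fiber x = infinity): v^3 + v^2 [x^2]p2 + v [x^4]p4 + [x^6]p6. *)
Definition trig_eq_inf (R : realType) (B : trigonal R) (v : R) : R :=
  v ^+ 3 + v ^+ 2 * (tp2 B)`_2 + v * (tp4 B)`_4 + (tp6 B)`_6.

(* Real points of B:  affine real points (x,y), plus real points (u=0, v) on
   the fiber at infinity.  (B is disjoint from E, so these are all of B_R.) *)

(* Coordinates of a real proper section  y = a x^2 + b x + c,  (a,b,c) in R^3. *)
Definition sec_a (R : realType) (s : 'rV[R]_3) : R := s ord0 (@Ordinal 3 0 isT).
Definition sec_b (R : realType) (s : 'rV[R]_3) : R := s ord0 (@Ordinal 3 1 isT).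
Definition sec_c (R : realType) (s : 'rV[R]_3) : R := s ord0 (@Ordinal 3 2 isT).

(* The two regions of (Sigma_2)_R \ (L_R u E_R):
   "above" L :  { y > a x^2 + b x + c }  u  { u = 0, v > a },
   "below" L :  { y < a x^2 + b x + c }  u  { u = 0, v < a }.
   (In the chart (u,v), y - (a x^2+bx+c) = x^2 (v - (a + b u + c u^2)),
   so these descriptions agree on the overlap of the charts.)
   B_R lies in the region above (resp. below) L: *)
Definition B_above (R : realType) (B : trigonal R) (s : 'rV[R]_3) : Prop :=
  (forall x y : R, trig_eq B x y = 0 ->
     sec_a s * x ^+ 2 + sec_b s * x + sec_c s < y) /\
  (forall v : R, trig_eq_inf B v = 0 -> sec_a s < v).

Definition B_below (R : realType) (B : trigonal R) (s : 'rV[R]_3) : Prop :=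
  (forall x y : R, trig_eq B x y = 0 ->
     y < sec_a s * x ^+ 2 + sec_b s * x + sec_c s) /\
  (forall v : R, trig_eq_inf B v = 0 -> v < sec_a s).

Definition non_separating (R : realType) (B : trigonal R) (s : 'rV[R]_3) : Prop :=
  B_above B s \/ B_below B s.

Definition nonsep_set (R : realType) (B : trigonal R) : set 'rV[R]_3 :=
  [set s | non_separating B s].

(* Main.v *)
Require Import Defs.
From HB Require Import structures.
From mathcomp Require Import all_boot all_order all_algebra.
From mathcomp Require Import all_classical all_reals all_analysis.
From mathcomp Require Import ring lra zify.
Set Implicit Arguments. Unset Strict Implicit. Unset Printing Implicit Defensive.
Import Order.TTheory GRing.Theory Num.Theory.
Import numFieldNormedType.Exports.
Local Open Scope classical_set_scope.
Local Open Scope ring_scope.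

Section Bounds.
Variable R : realType.
Implicit Types (p : {poly R}) (x y : R).

Definition Cp p : R := \sum_(i < size p) `|p`_i|.

Lemma Cp_ge0 p : 0 <= Cp p.
Proof. by apply: sumr_ge0 => i _; exact: normr_ge0. Qed.

Lemma coef_le_Cp p i : `|p`_i| <= Cp p.
Proof.
have [ip|ip] := ltnP i (size p); last first.
  by rewrite nth_default // normr0 Cp_ge0.
rewrite /Cp (bigD1 (Ordinal ip)) //= lerDl.
by apply: sumr_ge0 => j _; exact: normr_ge0.
Qed.

Lemma pow_le_t x i k : (i <= k.*2)%N -> `|x| ^+ i <= (1 + x ^+ 2) ^+ k.
Proof.
move=> ik; have t1 : 1 <= 1 + x ^+ 2 by rewrite lerDl sqr_ge0.
case: (leP `|x| 1) => h.
  apply: le_trans (exprn_ege1 k t1).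
  by apply: exprn_ile1 => //; exact: normr_ge0.
have h2 : `|x| ^+ i <= `|x| ^+ k.*2 by apply: ler_weXn2l => //; exact: ltW.
apply: le_trans h2 _.
rewrite -muln2 mulnC exprM real_normK ?num_real // lerXn2r ?nnegrE ?sqr_ge0 ?lerDr //.
exact: le_trans t1.
Qed.

Lemma poly_bound p k x : (size p <= k.*2.+1)%N ->
  `|p.[x]| <= Cp p * (1 + x ^+ 2) ^+ k.
Proof.
move=> sp; rewrite horner_coef /Cp mulr_suml.
apply: le_trans (ler_norm_sum _ _ _) _.
apply: ler_sum => i _; rewrite normrM normrX ler_wpM2l //.
apply: pow_le_t; have := ltn_ord i; move: sp; lia.
Qed.

Lemma root_bound (q2 q4 q6 y T : R) : 0 <= T -> `|q2| <= T -> `|q4| <= T ^+ 2 ->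
  `|q6| <= T ^+ 3 -> y ^+ 3 + y ^+ 2 * q2 + y * q4 + q6 = 0 -> `|y| <= 3 * T.
Proof.
move=> T0 h2 h4 h6 e.
have ey : `|y| ^+ 3 <= `|y| ^+ 2 * T + `|y| * T ^+ 2 + T ^+ 3.
  have : y ^+ 3 = - (y ^+ 2 * q2 + y * q4 + q6).
    by apply/eqP; rewrite -subr_eq0 -e; apply/eqP; ring.
  move/(congr1 Num.norm); rewrite normrX normrN => ->.
  apply: le_trans (ler_normD _ _) _; apply: lerD => //.
  apply: le_trans (ler_normD _ _) _; apply: lerD.
    by rewrite normrM normrX ler_wpM2l // exprn_ge0.
  by rewrite normrM ler_wpM2l.
rewrite leNgt; apply/negP => hy.
set Y := `|y| in ey hy.
have Y0 : 0 <= Y by exact: normr_ge0.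
have H1 : 0 < Y - 3 * T by rewrite subr_gt0.
have H2 : 0 <= Y ^+ 2 + 2 * T * Y + 5 * T ^+ 2.
  by rewrite !addr_ge0 // ?mulr_ge0 // exprn_ge0.
have H3 : 0 <= 14 * T ^+ 3 by rewrite mulr_ge0 // exprn_ge0.
have H4 : 0 < Y ^+ 2 + 2 * T * Y + 5 * T ^+ 2.
  have : 0 < Y by apply: le_lt_trans hy; rewrite mulr_ge0.
  move=> Yp; apply: lt_le_trans (_ : 0 < Y ^+ 2) _; first exact: exprn_gt0.
  by rewrite -addrA lerDl addr_ge0 // ?mulr_ge0 // exprn_ge0.
have := mulr_gt0 H1 H4 => H5.
move: ey; rewrite leNgt => /negP; apply.
rewrite -subr_gt0; apply: lt_le_trans (ltr_wpDr H3 H5) _; rewrite le_eqVlt; apply/orP; left; apply/eqP; ring.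
Qed.

End Bounds.

Section Bounds2.
Variable R : realType.
Variable B : trigonal R.

Definition MB : R := 1 + Cp (tp2 B) + Cp (tp4 B) + Cp (tp6 B).

Lemma MB_ge1 : 1 <= MB.
Proof. by rewrite /MB -!addrA lerDl !addr_ge0 // Cp_ge0. Qed.

Lemma MB_ge0 : 0 <= MB.
Proof. exact: le_trans MB_ge1. Qed.

Lemma C2_le : Cp (tp2 B) <= MB.
Proof. by rewrite /MB; have := Cp_ge0 (tp4 B); have := Cp_ge0 (tp6 B); lra. Qed.
Lemma C4_le : Cp (tp4 B) <= MB.
Proof. by rewrite /MB; have := Cp_ge0 (tp2 B); have := Cp_ge0 (tp6 B); lra. Qed.
Lemma C6_le : Cp (tp6 B) <= MB.
Proof. by rewrite /MB; have := Cp_ge0 (tp4 B); have := Cp_ge0 (tp2 B); lra. Qed.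

Lemma scale_le (C s : R) n : (0 < n)%N -> 0 <= C -> C <= MB -> 0 <= s ->
  C * s ^+ n <= (MB * s) ^+ n.
Proof.
move=> n0 C0 CM s0; rewrite exprMn ler_wpM2r ?exprn_ge0 //.
apply: le_trans CM _; rewrite -{1}(expr1 MB).
by apply: ler_weXn2l => //; exact: MB_ge1.
Qed.


Lemma affine_bound x y : trig_eq B x y = 0 -> `|y| <= 3 * (MB * (1 + x ^+ 2)).
Proof.
move=> e; have t0 : 0 <= 1 + x ^+ 2 by rewrite addr_ge0 // sqr_ge0.
apply: (root_bound (T := MB * (1 + x ^+ 2)) _ _ _ _ e).
- by rewrite mulr_ge0 // MB_ge0.
- apply: le_trans (@poly_bound _ _ 1 x (tp2_deg B)) _.
  by rewrite -(expr1 (_ * _)); apply: scale_le => //; [exact: Cp_ge0|exact: C2_le].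
- apply: le_trans (@poly_bound _ _ 2 x (tp4_deg B)) _.
  by apply: scale_le => //; [exact: Cp_ge0|exact: C4_le].
- apply: le_trans (@poly_bound _ _ 3 x (tp6_deg B)) _.
  by apply: scale_le => //; [exact: Cp_ge0|exact: C6_le].
Qed.

Lemma inf_bound v : trig_eq_inf B v = 0 -> `|v| <= 3 * MB.
Proof.
move=> e; apply: (root_bound (T := MB) _ _ _ _ e).
- exact: MB_ge0.
- exact: le_trans (coef_le_Cp _ _) C2_le.
- apply: le_trans (coef_le_Cp _ _) (le_trans C4_le _).
  by rewrite -{1}(expr1 MB); apply: ler_weXn2l => //; exact: MB_ge1.
- apply: le_trans (coef_le_Cp _ _) (le_trans C6_le _).
  by rewrite -{1}(expr1 MB); apply: ler_weXn2l => //; exact: MB_ge1.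
Qed.

End Bounds2.

Local Open Scope convex_scope.

Definition Splus (R : realType) (B : trigonal R) : set 'rV[R]_3 := [set s | B_above B s].
Definition Sminus (R : realType) (B : trigonal R) : set 'rV[R]_3 := [set s | B_below B s].

Section Basic.
Variable R : realType.
Variable B : trigonal R.

Definition mkrow (a b c : R) : 'rV[R]_3 :=
  \row_(j < 3) (if val j == 0%N then a else if val j == 1%N then b else c).

Lemma mkrow_a a b c : sec_a (mkrow a b c) = a. Proof. by rewrite /sec_a mxE. Qed.
Lemma mkrow_b a b c : sec_b (mkrow a b c) = b. Proof. by rewrite /sec_b mxE. Qed.
Lemma mkrow_c a b c : sec_c (mkrow a b c) = c. Proof. by rewrite /sec_c mxE. Qed.

Lemma witness_plus : Splus B (mkrow (- (3 * MB B + 1)) 0 (- (3 * MB B + 1))).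
Proof.
rewrite /Splus /B_above /= mkrow_a mkrow_b mkrow_c; split.
  move=> x y /affine_bound; rewrite ler_norml => /andP[h _].
  apply: lt_le_trans h; have t0 : 0 <= x ^+ 2 by exact: sqr_ge0.
  set M := MB B in t0 *; set X := x ^+ 2 in t0 *.
  have -> : - (3 * M + 1) * X + 0 * x + - (3 * M + 1) = - (3 * (M * (1 + X))) - (1 + X) by ring.
  by rewrite ltrBlDr ltrDl ltr_pwDl.
move=> v /inf_bound; rewrite ler_norml => /andP[h _].
by apply: lt_le_trans h; rewrite ltrN2 ltrDl.
Qed.

Lemma conv_lt (l A1 A2 Y : R) : 0 <= l -> l <= 1 -> A1 < Y -> A2 < Y ->
  l * A1 + (1 - l) * A2 < Y.
Proof.
move=> l0 l1 h1 h2; rewrite -subr_lt0.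
have -> : l * A1 + (1 - l) * A2 - Y = l * (A1 - Y) + (1 - l) * (A2 - Y) by ring.
have [->|lp] := eqVneq l 0; first by rewrite mul0r add0r subr0 mul1r subr_lt0.
have lp' : 0 < l by rewrite lt_neqAle eq_sym lp.
have hu : l * (A1 - Y) < 0 by rewrite pmulr_rlt0 // subr_lt0.
have hw : (1 - l) * (A2 - Y) <= 0.
  by rewrite mulr_ge0_le0 // ?subr_ge0 // ltW // subr_lt0.
lra.
Qed.

Lemma conv_gt (l A1 A2 Y : R) : 0 <= l -> l <= 1 -> Y < A1 -> Y < A2 ->
  Y < l * A1 + (1 - l) * A2.
Proof.
move=> l0 l1 h1 h2; rewrite -ltrN2.
have -> : - (l * A1 + (1 - l) * A2) = l * (- A1) + (1 - l) * (- A2) by ring.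
by apply: conv_lt; rewrite // ltrN2.
Qed.

Lemma conv_coord (x y : 'rV[R]_3) (l : {i01 R}) j :
  ((x : convex_lmodType 'rV[R]_3) <| l |> y) ord0 j = l%:num * x ord0 j + (1 - l%:num) * y ord0 j.
Proof. by rewrite /= !mxE. Qed.

Lemma convex_plus : @convex_set R 'rV[R]_3 (Splus B).
Proof.
move=> x y l; rewrite !inE /Splus /B_above /= => -[hx1 hx2] [hy1 hy2].
have l0 : 0 <= l%:num by apply: ge0.
have l1 : l%:num <= 1 by apply: le1.
rewrite /sec_a /sec_b /sec_c !conv_coord; split.
  move=> X Y e; have := hx1 X Y e; have := hy1 X Y e.
  rewrite /sec_a /sec_b /sec_c => h2 h1.
  have := conv_lt l0 l1 h1 h2; apply: le_lt_trans.
  by rewrite le_eqVlt; apply/orP; left; apply/eqP; ring.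
move=> v e; have := hx2 v e; have := hy2 v e; rewrite /sec_a => h2 h1.
exact: conv_lt.
Qed.

Lemma convex_minus : @convex_set R 'rV[R]_3 (Sminus B).
Proof.
move=> x y l; rewrite !inE /Sminus /B_below /= => -[hx1 hx2] [hy1 hy2].
have l0 : 0 <= l%:num by apply: ge0.
have l1 : l%:num <= 1 by apply: le1.
rewrite /sec_a /sec_b /sec_c !conv_coord; split.
  move=> X Y e; have := hx1 X Y e; have := hy1 X Y e.
  rewrite /sec_a /sec_b /sec_c => h2 h1.
  have := conv_gt l0 l1 h1 h2; move/lt_le_trans; apply.
  by rewrite le_eqVlt; apply/orP; left; apply/eqP; ring.
move=> v e; have := hx2 v e; have := hy2 v e; rewrite /sec_a => h2 h1.
exact: conv_gt.
Qed.

End Basic.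

Section Neg.
Variable R : realType.
Variable B : trigonal R.

Lemma negB2 : (size (- tp2 B) <= 3)%N. Proof. by rewrite size_polyN tp2_deg. Qed.
Lemma negB6 : (size (- tp6 B) <= 7)%N. Proof. by rewrite size_polyN tp6_deg. Qed.

Definition negB : trigonal R := Trigonal negB2 (tp4_deg B) negB6.

Lemma trig_eq_neg x y : trig_eq negB x y = - trig_eq B x (- y).
Proof. rewrite /trig_eq /= !hornerN; ring. Qed.

Lemma trig_eq_inf_neg v : trig_eq_inf negB v = - trig_eq_inf B (- v).
Proof. rewrite /trig_eq_inf /= !coefN; ring. Qed.

Lemma sec_neg (s : 'rV[R]_3) :
  [/\ sec_a (- s) = - sec_a s, sec_b (- s) = - sec_b s & sec_c (- s) = - sec_c s].
Proof. by rewrite /sec_a /sec_b /sec_c !mxE. Qed.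

Lemma Sminus_neg : Sminus B = (fun s => - s) @^-1` Splus negB.
Proof.
apply/seteqP; split => s; rewrite /Sminus /Splus /B_below /B_above /=;
  have [-> -> ->] := sec_neg s.
- move=> /= [h1 h2]; split.
    move=> x y; rewrite trig_eq_neg => /eqP; rewrite oppr_eq0 => /eqP/h1.
    by move=> h; lra.
  move=> v; rewrite trig_eq_inf_neg => /eqP; rewrite oppr_eq0 => /eqP/h2.
  by move=> h; lra.
- move=> /= [h1 h2]; split.
    move=> x y e; have : trig_eq negB x (- y) = 0 by rewrite trig_eq_neg opprK e oppr0.
    by move/h1 => h; lra.
  move=> v e; have : trig_eq_inf negB (- v) = 0 by rewrite trig_eq_inf_neg opprK e oppr0.
  by move/h2 => h; lra.
Qed.

End Neg.

Section Topo.
Variable R : realType.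
Implicit Types (f g : 'rV[R]_2 -> R).

Lemma cont_coord (i : 'I_2) : continuous (fun w : 'rV[R]_2 => w ord0 i).
Proof. exact: coord_continuous. Qed.

Lemma cont_add f g : continuous f -> continuous g -> continuous (fun w => f w + g w).
Proof. move=> cf cg x; have := continuousD (cf x) (cg x); exact. Qed.

Lemma cont_mul f g : continuous f -> continuous g -> continuous (fun w => f w * g w).
Proof. move=> cf cg x; have := continuousM (cf x) (cg x); exact. Qed.

Lemma cont_opp f : continuous f -> continuous (fun w => - f w).
Proof. move=> cf x; have := continuousN (cf x); exact. Qed.

Lemma cont_cst (r : R) : continuous (fun _ : 'rV[R]_2 => r).
Proof. exact: cst_continuous. Qed.

Lemma cont_exp f n : continuous f -> continuous (fun w => f w ^+ n).
Proof.
move=> cf; elim: n => [|n IH].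
  have -> : (fun w => f w ^+ 0) = (fun=> 1) by apply/funext => w; rewrite expr0.
  exact: cont_cst.
have -> : (fun w => f w ^+ n.+1) = (fun w => f w * f w ^+ n).
  by apply/funext => w; rewrite exprS.
exact: cont_mul.
Qed.

Lemma cont_horner (p : {poly R}) f : continuous f -> continuous (fun w => p.[f w]).
Proof.
move=> cf x; apply: (@continuous_comp _ _ _ f (horner p)); first exact: cf.
exact: continuous_horner.
Qed.

Lemma closed_leF f g : continuous f -> continuous g -> closed [set w | f w <= g w].
Proof.
move=> cf cg.
have -> : [set w | f w <= g w] = (fun w => f w - g w) @^-1` [set x | x <= 0].
  by apply/seteqP; split => w /=; rewrite subr_le0.
apply: preimage_closed; last exact: closed_le.
by move=> x _; apply: cont_add => //; exact: cont_opp.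
Qed.

Lemma closed_eqF f : continuous f -> closed [set w | f w = 0].
Proof.
move=> cf; apply: (@preimage_closed _ _ f [set x | x = 0]); last exact: closed_eq.
by move=> x _; exact: cf.
Qed.

Lemma compact_box (P : set 'rV[R]_2) (L : R) : closed P ->
  (forall w, P w -> forall i, -L <= w ord0 i <= L) -> compact P.
Proof.
move=> cP PB; apply: (subclosed_compact cP (@rV_compact _ _ (fun=> `[-L, L]%classic) _)).
  by move=> _; exact: segment_compact.
by move=> w Pw i /=; rewrite in_itv /=; exact: PB.
Qed.

Lemma pos_min (P : set 'rV[R]_2) g : compact P -> continuous g ->
  (forall w, P w -> 0 < g w) -> exists2 e, 0 < e & forall w, P w -> e <= g w.
Proof.
move=> cP cg gpos; have [[w0 Pw0]|P0] := pselect (P !=set0); last first.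
  exists 1 => // w Pw; exfalso; apply: P0; by exists w.
have gP : {within P, continuous g} by apply: continuous_subspaceT.
have [c cP' cmin] := @EVT_min_rV R 2 g P (ex_intro _ w0 Pw0) cP gP.
rewrite inE in cP'.
exists (g c); first exact: gpos.
by move=> w Pw; apply: cmin; rewrite inE.
Qed.

End Topo.

Section Rev.
Variable R : realType.

Definition rv (n : nat) (p : {poly R}) : {poly R} := \poly_(i < n.+1) p`_(n - i).

Lemma rv0 n (p : {poly R}) : (rv n p).[0] = p`_n.
Proof. by rewrite horner_coef0 coef_poly /= subn0. Qed.

Lemma rv_eval n (p : {poly R}) (u : R) : (size p <= n.+1)%N -> u != 0 ->
  (rv n p).[u] = p.[u^-1] * u ^+ n.
Proof.
move=> sp u0.
have sr : (size (rv n p) <= n.+1)%N by exact: size_poly.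
rewrite (horner_coef_wide _ sr) (horner_coef_wide _ sp) mulr_suml.
rewrite (reindex_inj rev_ord_inj) /=; apply: eq_bigr => i _.
have ile : (i <= n)%N by rewrite -ltnS ltn_ord.
have e1 : (n.+1 - i.+1 = n - i)%N by rewrite subSS.
rewrite coef_poly /= e1 (leq_ltn_trans (leq_subr _ _) (ltnSn n)) subKn //.
rewrite -mulrA; congr (_ * _).
rewrite exprVn.
have -> : u ^+ n = u ^+ (n - i) * u ^+ i by rewrite -exprD subnK.
field; by rewrite expf_neq0.
Qed.

End Rev.

Section Chart2.
Variable R : realType.
Variable B : trigonal R.

Definition F2v (u z : R) : R :=
  z ^+ 3 + z ^+ 2 * (rv 2 (tp2 B)).[u] + z * (rv 4 (tp4 B)).[u] + (rv 6 (tp6 B)).[u].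

Lemma F2v0 z : F2v 0 z = trig_eq_inf B z.
Proof. by rewrite /F2v /trig_eq_inf !rv0. Qed.

Lemma F2v_eval u z : u != 0 -> F2v u z = trig_eq B u^-1 (z * u^-1 ^+ 2) * u ^+ 6.
Proof.
move=> u0; rewrite /F2v /trig_eq !rv_eval ?tp2_deg ?tp4_deg ?tp6_deg //.
field; exact: u0.
Qed.

End Chart2.

Section Helpers.
Variable R : realType.

Definition i0 : 'I_2 := @Ordinal 2 0 isT.
Definition i1 : 'I_2 := @Ordinal 2 1 isT.

Lemma ord2_cases (i : 'I_2) : i = i0 \/ i = i1.
Proof. by case: i => [[|[|k]] hk]; [left|right|]; try apply: val_inj. Qed.

Definition mk2 (u z : R) : 'rV[R]_2 := \row_(j < 2) (if val j == 0%N then u else z).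
Lemma mk2_0 u z : mk2 u z ord0 i0 = u. Proof. by rewrite mxE. Qed.
Lemma mk2_1 u z : mk2 u z ord0 i1 = z. Proof. by rewrite mxE. Qed.

Lemma small_quad (d0 d1 d2 e t : R) : `|d0| < e -> `|d1| < e -> `|d2| < e ->
  `|t| <= 1 -> d0 * t ^+ 2 + d1 * t + d2 < 3 * e.
Proof.
move=> h0 h1 h2 ht.
have t2 : `|t| ^+ 2 <= 1 by apply: exprn_ile1 => //; exact: normr_ge0.
have a0 : `|d0 * t ^+ 2| < e.
  rewrite normrM normrX; apply: le_lt_trans h0; apply: ler_piMr => //; exact: normr_ge0.
have a1 : `|d1 * t| < e.
  rewrite normrM; apply: le_lt_trans h1; apply: ler_piMr => //; exact: normr_ge0.
have := ler_norm (d0 * t ^+ 2); have := ler_norm (d1 * t); have := ler_norm d2.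
lra.
Qed.

Lemma mul_sq_lt (t A Y : R) : t != 0 -> A * t ^+ 2 < Y * t ^+ 2 -> A < Y.
Proof.
move=> t0; have t2 : 0 < t ^+ 2 by rewrite exprn_even_gt0 // t0 orbT.
by rewrite ltr_pM2r.
Qed.

Lemma chart_ineq (a b c u z : R) : u != 0 ->
  a * u^-1 ^+ 2 + b * u^-1 + c < z * u^-1 ^+ 2 -> a + b * u + c * u ^+ 2 < z.
Proof.
move=> u0 h; apply: (@mul_sq_lt (u^-1)); first by rewrite invr_eq0.
have -> : (a + b * u + c * u ^+ 2) * u^-1 ^+ 2 = a * u^-1 ^+ 2 + b * u^-1 + c.
  by field.
exact: h.
Qed.

Lemma chart_ineq2 (a b c x y : R) : x != 0 ->
  a + b * x^-1 + c * x^-1 ^+ 2 < y * x^-1 ^+ 2 -> a * x ^+ 2 + b * x + c < y.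
Proof.
move=> x0 h; apply: (@mul_sq_lt (x^-1)); first by rewrite invr_eq0.
have -> : (a * x ^+ 2 + b * x + c) * x^-1 ^+ 2 = a + b * x^-1 + c * x^-1 ^+ 2.
  by field.
exact: h.
Qed.

End Helpers.

Section Open.
Variable R : realType.
Variable B : trigonal R.

Lemma cont_F1 : continuous (fun w : 'rV[R]_2 => trig_eq B (w ord0 i0) (w ord0 i1)).
Proof.
rewrite /trig_eq.
have c0 := @cont_coord R i0; have c1 := @cont_coord R i1.
repeat first [ exact: c0 | exact: c1 | apply: cont_add | apply: cont_mul
  | apply: cont_exp | apply: cont_horner ].
Qed.

Lemma cont_F2 : continuous (fun w : 'rV[R]_2 => F2v B (w ord0 i0) (w ord0 i1)).
Proof.
rewrite /F2v.
have c0 := @cont_coord R i0; have c1 := @cont_coord R i1.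
repeat first [ exact: c0 | exact: c1 | apply: cont_add | apply: cont_mul
  | apply: cont_exp | apply: cont_horner ].
Qed.

Definition boxP (L : R) (F : 'rV[R]_2 -> R) : set 'rV[R]_2 :=
  [set w : 'rV[R]_2 | -1 <= w ord0 i0] `&` [set w : 'rV[R]_2 | w ord0 i0 <= 1] `&`
  [set w : 'rV[R]_2 | -L <= w ord0 i1] `&` [set w : 'rV[R]_2 | w ord0 i1 <= L] `&` [set w : 'rV[R]_2 | F w = 0].

Lemma boxP_compact L F : 1 <= L -> continuous F -> compact (boxP L F).
Proof.
move=> L1 cF; apply: (@compact_box _ _ L).
  have c0 := @cont_coord R i0; have c1 := @cont_coord R i1.
  repeat apply: closedI; try (apply: closed_leF => //; exact: cont_cst).
  exact: closed_eqF.
move=> w [[[[h1 h2] h3] h4] _] i; case: (ord2_cases i) => ->; last by rewrite h3 h4.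
apply/andP; split; last exact: le_trans L1.
by apply: le_trans h1; rewrite lerN2.
Qed.

End Open.

Section Open2.
Variable R : realType.
Variable B : trigonal R.

Lemma open_plus : open (Splus B).
Proof.
rewrite openE => s [h1 h2].
set a := sec_a s; set b := sec_b s; set c := sec_c s.
set M := MB B.
have M1 : 1 <= M := MB_ge1 B.
set L := 6 * M + 1.
have L1 : 1 <= L by rewrite /L lerDr mulr_ge0 // (le_trans ler01 M1).
pose g1 (w : 'rV[R]_2) := w ord0 i1 - (a * w ord0 i0 ^+ 2 + b * w ord0 i0 + c).
pose g2 (w : 'rV[R]_2) := w ord0 i1 - (a + b * w ord0 i0 + c * w ord0 i0 ^+ 2).
have c0 := @cont_coord R i0; have c1 := @cont_coord R i1.
have cc := @cont_cst R.
have cg1 : continuous g1.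
  rewrite /g1; repeat first [ exact: c0 | exact: c1 | exact: cc | apply: cont_add
    | apply: cont_mul | apply: cont_opp | apply: cont_exp ].
have cg2 : continuous g2.
  rewrite /g2; repeat first [ exact: c0 | exact: c1 | exact: cc | apply: cont_add
    | apply: cont_mul | apply: cont_opp | apply: cont_exp ].
have pos1 : forall w, boxP L (fun w : 'rV[R]_2 => trig_eq B (w ord0 i0) (w ord0 i1)) w -> 0 < g1 w.
  move=> w [_ e]; rewrite /g1 subr_gt0; exact: h1.
have pos2 : forall w, boxP L (fun w : 'rV[R]_2 => F2v B (w ord0 i0) (w ord0 i1)) w -> 0 < g2 w.
  move=> w [_ e]; rewrite /g2 subr_gt0.
  have [u0|u0] := eqVneq (w ord0 i0) 0.
    move: e => /=; rewrite u0 F2v0 => /h2 h; by rewrite expr0n /= !mulr0 !addr0.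
  apply: chart_ineq => //; apply: h1.
  move: e => /=; rewrite F2v_eval // => /eqP; rewrite mulf_eq0 expf_eq0 /= (negbTE u0) orbF.
  by move/eqP.
have [e1 e1p He1] := pos_min (boxP_compact L1 (@cont_F1 R B)) cg1 pos1.
have [e2 e2p He2] := pos_min (boxP_compact L1 (@cont_F2 R B)) cg2 pos2.
set e := Num.min e1 e2.
have ep : 0 < e by rewrite lt_min e1p e2p.
have ee1 : e <= e1 by rewrite ge_min lexx.
have ee2 : e <= e2 by rewrite ge_min lexx orbT.
set d := e / 4.
have dp : 0 < d by rewrite divr_gt0.
have ed : e = 4 * d by rewrite /d mulrC divfK.
have cA := @coord_continuous R 1 3 ord0 (@Ordinal 3 0 isT).
have cB := @coord_continuous R 1 3 ord0 (@Ordinal 3 1 isT).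
have cC := @coord_continuous R 1 3 ord0 (@Ordinal 3 2 isT).
rewrite /interior /=.
near=> s'.
have da : `|a - sec_a s'| < d.
  by rewrite /a /sec_a; near: s'; move: (cA s) => /cvgr_dist_lt /(_ _ dp).
have db : `|b - sec_b s'| < d by rewrite /b /sec_b; near: s'; move: (cB s) => /cvgr_dist_lt /(_ _ dp).
have dc : `|c - sec_c s'| < d by rewrite /c /sec_c; near: s'; move: (cC s) => /cvgr_dist_lt /(_ _ dp).
have da' : `|sec_a s' - a| < d by rewrite distrC.
have db' : `|sec_b s' - b| < d by rewrite distrC.
have dc' : `|sec_c s' - c| < d by rewrite distrC.
move: da => /ltr_normlP [da1 da2].
have L6 : 6 * M <= L by rewrite /L lerDl.
split.
- move=> x y eq.
  have yb := affine_bound eq; rewrite -/M in yb.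
  have x2 : 0 <= x ^+ 2 by exact: sqr_ge0.
  have M0 : 0 <= M by exact: le_trans ler01 M1.
  case: (leP `|x| 1) => hx.
  + have xx : x ^+ 2 <= 1.
      by rewrite -real_normK ?num_real //; apply: exprn_ile1 => //; exact: normr_ge0.
    have yL : `|y| <= L.
      apply: le_trans yb (le_trans _ L6).
      have := ler_wpM2l M0 xx; lra.
    move: hx yL; rewrite !ler_norml => /andP[hx1 hx2] /andP[hy1 hy2].
    have Pw : boxP L (fun w : 'rV[R]_2 => trig_eq B (w ord0 i0) (w ord0 i1)) (mk2 x y).
      by rewrite /boxP /= !mk2_0 !mk2_1; split; [split; [split; [split|]|]|].
    have := He1 _ Pw; rewrite /g1 !mk2_0 !mk2_1 => H.
    have sq := small_quad da' db' dc' (_ : `|x| <= 1).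
    have := sq (ltac:(by rewrite ler_norml hx1 hx2)).
    lra.
  + have x0 : x != 0 by rewrite -normr_gt0 (lt_trans ltr01 hx).
    have u0 : x^-1 != 0 by rewrite invr_eq0.
    have hu : `|x^-1| <= 1.
      by rewrite normfV invf_le1 ?ltW // (lt_trans ltr01 hx).
    have u2 : x^-1 ^+ 2 <= 1.
      by rewrite -real_normK ?num_real //; apply: exprn_ile1 => //; exact: normr_ge0.
    have zL : `|y * x^-1 ^+ 2| <= L.
      rewrite normrM normrX real_normK ?num_real //.
      apply: le_trans (ler_wpM2r (sqr_ge0 _) yb) _.
      have -> : 3 * (M * (1 + x ^+ 2)) * x^-1 ^+ 2 = 3 * (M * (x^-1 ^+ 2 + 1)) by field.
      apply: le_trans L6; have := ler_wpM2l M0 u2; lra.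
    have Pw : boxP L (fun w : 'rV[R]_2 => F2v B (w ord0 i0) (w ord0 i1)) (mk2 x^-1 (y * x^-1 ^+ 2)).
      rewrite /boxP /= !mk2_0 !mk2_1.
      move: hu zL; rewrite !ler_norml => /andP[hu1 hu2] /andP[hz1 hz2].
      split; [split; [split; [split|]|]|]; [exact: hu1|exact: hu2|exact: hz1|exact: hz2|].
      rewrite /= F2v_eval // invrK.
      have -> : y * x^-1 ^+ 2 * x ^+ 2 = y by field.
      by rewrite eq mul0r.
    have := He2 _ Pw; rewrite /g2 !mk2_0 !mk2_1 => H.
    have sq := small_quad dc' db' da' hu.
    apply: chart_ineq2 => //.
    lra.
- move=> v ev; have vb := inf_bound ev; rewrite -/M in vb.
  have M0 : 0 <= M by exact: le_trans ler01 M1.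
  have vL : `|v| <= L by apply: le_trans vb (le_trans _ L6); rewrite ler_pM2r; lra.
  have Pw : boxP L (fun w : 'rV[R]_2 => F2v B (w ord0 i0) (w ord0 i1)) (mk2 0 v).
    rewrite /boxP /= !mk2_0 !mk2_1.
    move: vL; rewrite !ler_norml => /andP[hv1 hv2].
    split; [split; [split; [split|]|]|]; try lra.
    by rewrite /= F2v0.
  have := He2 _ Pw; rewrite /g2 !mk2_0 !mk2_1 expr0n /= !mulr0 !addr0 => H.
  lra.
Unshelve. all: by end_near.
Qed.

End Open2.

Local Open Scope convex_scope.

Section Conn.
Variable R : realType.

Lemma convex_connected (A : set 'rV[R]_3) : @convex_set R 'rV[R]_3 A -> connected A.
Proof.
move=> cA; have [[x0 Ax0]|A0] := pselect (A !=set0); last first.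
  have -> : A = set0 by apply/seteqP; split => x // Ax; apply: A0; exists x.
  exact: connected0.
pose f (y : 'rV[R]_3) (t : R) : 'rV[R]_3 := t *: y + (1 - t) *: x0.
pose seg y := f y @` `[0, 1]%classic.
have segA : forall y, A y -> seg y `<=` A.
  move=> y Ay _ [t t01 <-]; move: t01; rewrite /= in_itv /= => /andP[t0 t1].
  have := cA y x0 (Itv01 t0 t1) (mem_set Ay) (mem_set Ax0).
  by rewrite inE.
have -> : A = \bigcup_(y in A) seg y.
  apply/seteqP; split => [y Ay|z [y Ay]]; last exact: segA.
  exists y => //; exists 1; first by rewrite /= in_itv /= ler01 lexx.
  by rewrite /f scale1r subrr scale0r addr0.
apply: bigcup_connected.
  exists x0 => y Ay; exists 0; first by rewrite /= in_itv /= ler01 lexx.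
  by rewrite /f scale0r add0r subr0 scale1r.
move=> y Ay; apply: connected_continuous_connected; first exact: segment_connected.
apply: continuous_subspaceT => t.
have h1 : {for t, continuous (fun t : R => t *: y)}.
  by apply: continuousZr_tmp; exact: cvg_id.
have h2 : {for t, continuous (fun t : R => (1 - t) *: x0)}.
  apply: continuousZr_tmp.
  have := continuousB (@cst_continuous R R (1 : R) t) (@cvg_id _ (nbhs t)); exact.
have := continuousD h1 h2; exact.
Qed.

Lemma closure_disj (A B : set 'rV[R]_3) : open B -> A `&` B = set0 ->
  closure A `&` B = set0.
Proof.
move=> oB AB; apply/seteqP; split => // x [cx Bx].
have nB : nbhs x B by rewrite openE in oB; exact: oB.
have [y [Ay By]] := cx B nB.
have : (A `&` B) y by [].
by rewrite AB.
Qed.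

End Conn.

Section Root.
Variable R : realType.
Variable B : trigonal R.

Lemma inf_root : exists v, trig_eq_inf B v = 0.
Proof.
set c2 := (tp2 B)`_2; set c4 := (tp4 B)`_4; set c6 := (tp6 B)`_6.
pose P : {poly R} := 'X ^+ 3 + 'X ^+ 2 * c2%:P + 'X * c4%:P + c6%:P.
have fP : forall v, trig_eq_inf B v = P.[v].
  by move=> v; rewrite /P /trig_eq_inf !hornerE.
set K := 1 + `|c2| + `|c4| + `|c6|.
have K1 : 1 <= K by rewrite /K -!addrA lerDl !addr_ge0.
have K0 : 0 <= K by exact: le_trans ler01 K1.
have KK : K <= K ^+ 2 by rewrite expr2 ler_pMr // (lt_le_trans ltr01 K1).
have K2 : 1 <= K ^+ 2 by exact: le_trans K1 KK.
have n2 := normr_ge0 c2; have n4 := normr_ge0 c4; have n6 := normr_ge0 c6.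
have /andP[p2 q2] : - `|c2| <= c2 <= `|c2| by rewrite -ler_norml.
have /andP[p4 q4] : - `|c4| <= c4 <= `|c4| by rewrite -ler_norml.
have /andP[p6 q6] : - `|c6| <= c6 <= `|c6| by rewrite -ler_norml.
have Kq : 0 <= K ^+ 2 by exact: exprn_ge0.
have r2 := ler_wpM2l Kq p2; have r2' := ler_wpM2l Kq q2.
have r4 := ler_wpM2l K0 p4; have r4' := ler_wpM2l K0 q4.
have h4 : K * `|c4| <= K ^+ 2 * `|c4| by rewrite ler_wpM2r.
have h6 : `|c6| <= K ^+ 2 * `|c6| by rewrite ler_peMl.
have a2 : 0 <= K ^+ 2 * (`|c2| + c2) by rewrite mulrN in r2; lra.
have a2' : 0 <= K ^+ 2 * (`|c2| - c2) by lra.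
have b4 : 0 <= K ^+ 2 * `|c4| + K * c4 by rewrite mulrN in r4; lra.
have b4' : 0 <= K ^+ 2 * `|c4| - K * c4 by lra.
have d6 : 0 <= K ^+ 2 * `|c6| + c6 by lra.
have d6' : 0 <= K ^+ 2 * `|c6| - c6 by lra.
have fK : K ^+ 2 <= trig_eq_inf B K.
  rewrite -subr_ge0.
  have -> : trig_eq_inf B K - K ^+ 2 =
    K ^+ 2 * (`|c2| + c2) + (K ^+ 2 * `|c4| + K * c4) + (K ^+ 2 * `|c6| + c6).
    by rewrite /trig_eq_inf -/c2 -/c4 -/c6 /K; ring.
  by apply: addr_ge0; first apply: addr_ge0.
have fmK : trig_eq_inf B (- K) <= - K ^+ 2.
  rewrite -subr_ge0.
  have -> : - K ^+ 2 - trig_eq_inf B (- K) =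
    K ^+ 2 * (`|c2| - c2) + (K ^+ 2 * `|c4| + K * c4) + (K ^+ 2 * `|c6| - c6).
    by rewrite /trig_eq_inf -/c2 -/c4 -/c6 /K; ring.
  by apply: addr_ge0; first apply: addr_ge0.
have cf : {within `[- K, K], continuous (horner P)}.
  by apply: continuous_subspaceT; exact: continuous_horner.
have [v _ hv] : exists2 c, c \in `[- K, K]%R & (horner P) c = 0.
  apply: IVT cf _.
  by apply: (le_trans _ K0); rewrite oppr_le0.
  rewrite -!fP; apply/andP; split.
    rewrite ge_min; apply/orP; left; apply: le_trans fmK _.
    by rewrite lerNl oppr0 exprn_ge0.
  rewrite le_max; apply/orP; right; apply: le_trans fK; exact: exprn_ge0.
exists v; by rewrite fP.
Qed.

End Root.

Section Final.
Variable R : realType.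
Variable B : trigonal R.

Lemma disj_pm : Splus B `&` Sminus B = set0.
Proof.
apply/seteqP; split => // s [[_ h1] [_ h2]].
have [v ev] := inf_root B.
have := h1 v ev; have := h2 v ev => a b.
by have := lt_trans a b; rewrite ltxx.
Qed.

Lemma open_minus : open (Sminus B).
Proof.
rewrite Sminus_neg; apply: open_comp; last exact: open_plus.
by move=> x _; exact: opp_continuous.
Qed.

Lemma sep_pm : separated (Splus B) (Sminus B).
Proof.
split; first by apply: closure_disj; [exact: open_minus | exact: disj_pm].
rewrite setIC; apply: closure_disj; first exact: open_plus.
by rewrite setIC disj_pm.
Qed.

Lemma nonsep_U : nonsep_set B = Splus B `|` Sminus B.
Proof. by []. Qed.

Lemma comp_plus s : Splus B s -> connected_component (nonsep_set B) s = Splus B.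
Proof.
move=> hs; apply/seteqP; split.
  have := @connected_subset _ _ _ (connected_component (nonsep_set B) s) sep_pm.
  move=> /(_ (@connected_component_sub _ (nonsep_set B) s) (@component_connected _ (nonsep_set B) s)) [] // hm.
  have hs' : Sminus B s by apply: hm; apply: connected_component_refl; left.
  by have : (Splus B `&` Sminus B) s by []; rewrite disj_pm.
apply: connected_component_max => //; first by move=> x hx; left.
exact/convex_connected/convex_plus.
Qed.

Lemma comp_minus s : Sminus B s -> connected_component (nonsep_set B) s = Sminus B.
Proof.
move=> hs; apply/seteqP; split.
  have := @connected_subset _ _ _ (connected_component (nonsep_set B) s) sep_pm.
  move=> /(_ (@connected_component_sub _ (nonsep_set B) s) (@component_connected _ (nonsep_set B) s)) [] // hm.
  have hs' : Splus B s by apply: hm; apply: connected_component_refl; right.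
  by have : (Splus B `&` Sminus B) s by []; rewrite disj_pm.
apply: connected_component_max => //; first by move=> x hx; right.
exact/convex_connected/convex_minus.
Qed.

Lemma plus_ne : Splus B !=set0.
Proof. by eexists; exact: witness_plus. Qed.

Lemma minus_ne : Sminus B !=set0.
Proof.
have hw := @witness_plus R (negB B).
exists (- mkrow (- (3 * MB (negB B) + 1)) 0 (- (3 * MB (negB B) + 1))).
by rewrite Sminus_neg /= opprK.
Qed.

End Final.

Close Scope convex_scope.
Unset Implicit Arguments.

Theorem lemmaA1 (R : realType) (B : trigonal R) :
  exists Splus Sminus : set 'rV[R]_3,
    [/\ Splus <> Sminus,
        (forall C : set 'rV[R]_3,
           (exists2 s, nonsep_set B s & C = connected_component (nonsep_set B) s)
           <-> (C = Splus \/ C = Sminus)),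
        Splus !=set0 /\ Sminus !=set0,
        open Splus /\ open Sminus &
        @convex_set R 'rV[R]_3 Splus /\ @convex_set R 'rV[R]_3 Sminus].
Proof.
exists (Splus B), (Sminus B); split.
- move=> E; have [w hw] := plus_ne B.
  have : (Splus B `&` Sminus B) w by split => //; rewrite -E.
  by rewrite disj_pm.
- move=> C; split.
    by move=> [s [hs|hs] ->]; [left; exact: comp_plus | right; exact: comp_minus].
  move=> [->|->].
    have [w hw] := plus_ne B; exists w; first by left.
    by rewrite comp_plus.
  have [w hw] := minus_ne B; exists w; first by right.
  by rewrite comp_minus.
- by split; [exact: plus_ne | exact: minus_ne].
- by split; [exact: open_plus | exact: open_minus].
- by split; [exact: convex_plus | exact: convex_minus].
Qed.
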